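(* Let $\pi_1,\pi_2,\pi_3$ be Borel probability measures on $[0,\infty)$ such that $\mu=\pi_1\times\pi_2\times\pi_3$ satisfies $R\mu=\mu$, where $R(r,s,t)=(t+[r-s]^+,\,t+[s-r]^+,\,r\wedge s)$. Let $S$ be a finite hexagonal domain, and generate the flow field $\eta$ on $\mathbb{E}(\bar S)$ from the following independent families: - inputs on the ascending incoming edges, i.i.d. with law $\pi_1$; - inputs on the descending incoming edges, i.i.d. with law $\pi_2$; - births $(\xi_y)_{y\in S}$, i.i.d. with law $\pi_3$. Then the family of outputs $(\eta(e))$, over all outgoing edges $e$ of $S$, consists of independent random variables. Moreover $\eta(e)$ has law $\pi_1$ for every ascending outgoing edge $e$, and law $\pi_2$ for every descending outgoing edge $e$.
   Context: Lattice and edges. $\tilde{\mathbb{Z}}^2=\{(t,x)\in\mathbb{Z}^2:t+x\text{ even}\}$; edges join points at Euclidean distance $\sqrt2$. For $y=(t,x)$ write - $e^\nearrow_y=\langle(t,x),(t+1,x+1)\rangle$, - $e^\searrow_y=\langle(t,x),(t+1,x-1)\rangle$, - $e^\swarrow_y=\langle(t-1,x-1),(t,x)\rangle$, - $e^\nwarrow_y=\langle(t-1,x+1),(t,x)\rangle$. Hexagonal domain. A finite hexagonal domain is a set $S=\{(t,x)\in\tilde{\mathbb{Z}}^2: t_0\le t\le t_1,\ x_{t,-}\le x\le x_{t,+}\}$ where: - $t_0<t_1$ are integers; - $x_{t,-}\le x_{t,+}$ are integers with $t+x_{t,\pm}$ even; - for some $t^\pm_{01}\in[t_0,t_1]$ one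 has $x_{t+1,\pm}-x_{t,\pm}=\pm1$ for $t_0\le t<t^\pm_{01}$, and $x_{t+1,\pm}-x_{t,\pm}=\mp1$ for $t^\pm_{01}\le t<t_1$. Associated sets and edge types. $\bar S$ is $S$ together with all lattice points joined by an edge to a point of $S$, and $\mathbb{E}(\bar S)$ is the set of edges with an endpoint in $S$. - An incoming edge is $\langle y',y\rangle$ with $y\in S$, $y'\notin S$, $t(y')=t(y)-1$. It is ascending if it is $e^\swarrow_y$ and descending if it is $e^\nwarrow_y$. - An outgoing edge is $\langle y,y'\rangle$ with $y\in S$, $y'\notin S$, $t(y')=t(y)+1$. It is ascending if it is $e^\nearrow_y$ and descending if it is $e^\searrow_y$. Generated flow field. Defined recursively in increasing $t$: for $y\in S$, with $\zeta^+_y=\eta(e^\swarrow_y)$ and $\zeta^-_y=\eta(e^\nwarrow_y)$ (inputs or previously defined values), set $$\eta(e^\nearrow_y)=\xi_y+[\zeta^+_y-\zeta^-_y]^+,\qquad \eta(e^\searrow_y)=\xi_y+[\zeta^-_y-\zeta^+_y]^+.$$ *)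

(* Defs.v *)
From mathcomp Require Import all_boot all_order all_algebra.
From mathcomp Require Import all_classical all_reals all_analysis.
Set Implicit Arguments. Unset Strict Implicit. Unset Printing Implicit Defensive.
Import Order.TTheory GRing.Theory Num.Theory.
Local Open Scope ring_scope.
Local Open Scope classical_set_scope.

(** Points of Z^2 are pairs (t, x) of integers; the lattice \tilde Z^2 is the
    set of those with t + x even. *)
Definition pt := (int * int)%type.

Definition in_lattice (y : pt) : bool := (2 %| (y.1 + y.2))%Z.

(** An edge of \tilde Z^2 joins y = (t,x) to (t+1, x+1) or to (t+1, x-1).  We
    represent it by its lower (earlier-time) endpoint together with a boolean
    direction: [true] for the up-right step (t+1,x+1), [false] for the
    down-right step (t+1,x-1). *)
Definition edge := (pt * bool)%type.

Definition e_ne (y : pt) : edge := (y, true).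
Definition e_se (y : pt) : edge := (y, false).
Definition e_sw (y : pt) : edge := ((y.1 - 1, y.2 - 1), true).
Definition e_nw (y : pt) : edge := ((y.1 - 1, y.2 + 1), false).

(** Parameters: t0, t1, the boundary functions t |-> x_{t,-}, t |-> x_{t,+}
    (only their values for t0 <= t <= t1 matter) and the turning times
    t^-_{01}, t^+_{01}. *)
Record hexData := HexData {
  h_t0 : int; h_t1 : int;
  h_xm : int -> int; h_xp : int -> int;
  h_tm : int; h_tp : int }.

Definition is_hexagonal (D : hexData) : Prop :=
  let t0 := h_t0 D in let t1 := h_t1 D in
  let xm := h_xm D in let xp := h_xp D in
  [/\ t0 < t1,
      (forall t, t0 <= t <= t1 ->
         [/\ xm t <= xp t, (2 %| (t + xm t))%Z & (2 %| (t + xp t))%Z]),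
      t0 <= h_tm D <= t1 /\ t0 <= h_tp D <= t1,
      (forall t, t0 <= t < h_tp D -> xp (t + 1) - xp t = 1) /\
      (forall t, h_tp D <= t < t1 -> xp (t + 1) - xp t = -1)
    &
      (forall t, t0 <= t < h_tm D -> xm (t + 1) - xm t = -1) /\
      (forall t, h_tm D <= t < t1 -> xm (t + 1) - xm t = 1)].

Definition inS (D : hexData) (y : pt) : bool :=
  [&& h_t0 D <= y.1 <= h_t1 D, h_xm D y.1 <= y.2 <= h_xp D y.1 & in_lattice y].

Definition incoming_asc (D : hexData) (e : edge) : Prop :=
  exists y, [/\ inS D y, ~~ inS D (y.1 - 1, y.2 - 1) & e = e_sw y].
Definition incoming_desc (D : hexData) (e : edge) : Prop :=
  exists y, [/\ inS D y, ~~ inS D (y.1 - 1, y.2 + 1) & e = e_nw y].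
Definition outgoing_asc (D : hexData) (e : edge) : Prop :=
  exists y, [/\ inS D y, ~~ inS D (y.1 + 1, y.2 + 1) & e = e_ne y].
Definition outgoing_desc (D : hexData) (e : edge) : Prop :=
  exists y, [/\ inS D y, ~~ inS D (y.1 + 1, y.2 - 1) & e = e_se y].

Definition incoming D e := incoming_asc D e \/ incoming_desc D e.
Definition outgoing D e := outgoing_asc D e \/ outgoing_desc D e.

Section Flow.
Variables (R : realType) (D : hexData).
Variables (inp : edge -> R) (xi : pt -> R).

(** [flow_at n y] = (eta(e^ne_y), eta(e^se_y)), computed recursively in
    increasing time; [n] is the fuel t(y) - t0. *)
Fixpoint flow_at (n : nat) (y : pt) : R * R :=
  let ysw := (y.1 - 1, y.2 - 1) in
  let ynw := (y.1 - 1, y.2 + 1) in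
  let zp := match n with
            | 0 => inp (e_sw y)
            | n'.+1 => if inS D ysw then (flow_at n' ysw).1 else inp (e_sw y)
            end in
  let zm := match n with
            | 0 => inp (e_nw y)
            | n'.+1 => if inS D ynw then (flow_at n' ynw).2 else inp (e_nw y)
            end in
  (xi y + Num.max (zp - zm) 0, xi y + Num.max (zm - zp) 0).

(** eta on an edge whose lower endpoint y lies in S (this includes all
    outgoing edges): [n] = t(y) - t0. *)
Definition flow (e : edge) : R :=
  let v := flow_at `|e.1.1 - h_t0 D|%N e.1 in if e.2 then v.1 else v.2.

End Flow.

Definition Rmap (R : realType) (v : (R * R) * R) : (R * R) * R :=
  let r := v.1.1 in let s := v.1.2 in let t := v.2 in
  ((t + Num.max (r - s) 0, t + Num.max (s - r) 0), Num.min r s).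

Section Prob.
Context {d : measure_display} {Omega : measurableType d} {R : realType}.

Definition has_law (P : probability Omega R) (X : Omega -> R)
  (pi : probability R R) : Prop :=
  measurable_fun setT X /\
  forall B : set R, measurable B -> P (X @^-1` B) = pi B.

Definition mutually_independent {I : eqType} (P : probability Omega R)
  (Dom : set I) (X : I -> Omega -> R) : Prop :=
  (forall i, Dom i -> measurable_fun setT (X i)) /\
  forall (J : seq I) (B : I -> set R),
    uniq J -> (forall j, j \in J -> Dom j) ->
    (forall j, j \in J -> measurable (B j)) ->
    P [set w | forall j, j \in J -> B j (X j w)] =
      (\prod_(j <- J) P (X j @^-1` B j))%E.

End Prob.

(* Main.v *)
Require Import Defs.
From HB Require Import structures.
From mathcomp Require Import all_boot all_order all_algebra.
From mathcomp Require Import all_classical all_reals all_analysis.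
From mathcomp Require Import zify.
Import Order.TTheory GRing.Theory Num.Theory.
Local Open Scope ring_scope.
Local Open Scope classical_set_scope.
Section joint.
Local Open Scope ereal_scope.
Context d (Omega : measurableType d) (R : realType) (P : probability Omega R).
Context d1 d2 (T1 : measurableType d1) (T2 : measurableType d2).
Variables (m1 : {measure set T1 -> \bar R}) (m2 : probability T2 R).
Variables (U : Omega -> T1) (W : Omega -> T2) (F : set Omega).
Hypotheses (mU : measurable_fun setT U) (mW : measurable_fun setT W) (mF : measurable F).
Hypothesis hrect : forall X Y, measurable X -> measurable Y ->
  P (U @^-1` X `&` W @^-1` Y `&` F) = m1 X * m2 Y * P F.

Let UW w := (U w, W w).
Let mUW : measurable_fun setT UW. Proof. exact: measurable_fun_pair. Qed.
Let nu1 (A : set (T1 * T2)) := P (UW @^-1` A `&` F).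

Let nu1_0 : nu1 set0 = 0.
Proof. by rewrite /nu1 preimage_set0 set0I measure0. Qed.
Let nu1_ge0 A : 0 <= nu1 A.
Proof. exact: measure_ge0. Qed.
Let nu1_sigma_additive : semi_sigma_additive nu1.
Proof.
move=> G mG tG mUG; rewrite /nu1 preimage_bigcup setI_bigcupl.
apply: measure_semi_sigma_additive.
- by move=> n; apply: measurableI => //; rewrite -[X in measurable X]setTI; exact: mUW.
- apply/trivIsetP => /= i j _ _ ij; rewrite setIACA -preimage_setI.
  by move/trivIsetP : tG => /(_ _ _ _ _ ij) ->//; rewrite preimage_set0 set0I.
- rewrite -setI_bigcupl -preimage_bigcup; apply: measurableI => //.
  by rewrite -[X in measurable X]setTI; exact: mUW.
Qed.
HB.instance Definition _ := isMeasure.Build _ _ _ nu1 nu1_0 nu1_ge0 nu1_sigma_additive.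

Let c : {nonneg R}%R := NngNum (fine_ge0 (measure_ge0 P F)).
Let cE : (c%:num)%:E = P F.
Proof. by rewrite /= fineK// fin_num_measure. Qed.

Lemma joint_law A : measurable A -> P (UW @^-1` A `&` F) = (m1 \x m2) A * P F.
Proof.
move=> mA.
have -> : (m1 \x m2) A * P F = mscale c (m1 \x m2) A by rewrite /mscale -cE muleC.
rewrite -/(nu1 A).
apply: (measure_unique [set A1 `*` A2 | A1 in measurable & A2 in measurable] (fun=> setT)) => //.
- exact: measurable_prod_measurableType.
- move=> _ _ [X1 mX1 [X2 mX2 <-]] [Y1 mY1 [Y2 mY2 <-]].
  rewrite -setXI; exists (X1 `&` Y1); first exact: measurableI.
  by exists (X2 `&` Y2) => //; exact: measurableI.
- by move=> _; exists setT => //; exists setT => //; rewrite setXTT.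
- by rewrite bigcup_const.
- move=> _ [X mX [Y mY <-]].
  change (nu1 (X `*` Y) = ((c%:num)%:E * (m1 \x m2) (X `*` Y))%E); rewrite /nu1 cE product_measure1E// muleC -hrect//; congr (P _).
- move=> _; change (nu1 setT < +oo); rewrite /nu1; apply: (le_lt_trans (probability_le1 P _)); last exact: ltey.
  by apply: measurableI => //; rewrite -[X in measurable X]setTI; exact: mUW.
Qed.
End joint.
Lemma prod_split (I : eqType) (R : realType) (J : seq I) (F : I -> \bar R) x : uniq J ->
  (\prod_(j <- J) F j = (if x \in J then F x else 1) * \prod_(j <- [seq j <- J | j != x]) F j)%E.
Proof.
move=> uJ; case: ifPn => xJ.
  by rewrite big_filter; exact: bigD1_seq.
rewrite mul1e; congr bigop; apply/esym/all_filterP; apply/allP => j jJ.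
by apply/eqP => E; move: xJ; rewrite -E jJ.
Qed.
Lemma measurable_Rmap (R : realType) : measurable_fun setT (@Rmap R).
Proof.
have m11 : measurable_fun setT (fun v : (R * R) * R => v.1.1).
  by apply: measurableT_comp => //; exact: measurable_fst.
have m12 : measurable_fun setT (fun v : (R * R) * R => v.1.2).
  by apply: measurableT_comp => //; exact: measurable_fst.
have m2 : measurable_fun setT (fun v : (R * R) * R => v.2) by exact: measurable_snd.
rewrite /Rmap; apply: measurable_fun_pair; first apply: measurable_fun_pair.
- apply: measurable_realfun.measurable_funD => //; apply: measurable_realfun.measurable_maxr => //.
  exact: measurable_realfun.measurable_funB.
- apply: measurable_realfun.measurable_funD => //; apply: measurable_realfun.measurable_maxr => //.
  exact: measurable_realfun.measurable_funB.
- exact: measurable_realfun.measurable_minr.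
Qed.
Section step.
Local Open Scope ereal_scope.
Context d (Omega : measurableType d) (R : realType) (P : probability Omega R).
Variables pi1 pi2 pi3 : probability R R.
Hypothesis hinv : forall A : set ((R * R) * R), measurable A ->
     (pi1 \x pi2 \x pi3) (@Rmap R @^-1` A) = (pi1 \x pi2 \x pi3) A.
Variables (I : eqType) (Dom : set I) (Z : I -> Omega -> R) (law : I -> probability R R).
Variables (a b c : I).
Hypothesis hind : mutually_independent P Dom Z.
Hypothesis hlaw : forall i, Dom i -> has_law P (Z i) (law i).
Hypotheses (Da : Dom a) (Db : Dom b) (Dc : Dom c) (ab : a != b) (ac : a != c) (bc : b != c).
Hypotheses (la : law a = pi1) (lb : law b = pi2) (lc : law c = pi3).

Definition evt (J : seq I) (B : I -> set R) := [set w | forall j, j \in J -> B j (Z j w)].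

Let mZ i : Dom i -> measurable_fun setT (Z i).
Proof. exact: hind.1. Qed.

Let pre_meas i (B : set R) : Dom i -> measurable B -> measurable (Z i @^-1` B).
Proof. by move=> Di mB; rewrite -[X in measurable X]setTI; exact: mZ. Qed.

Lemma evt_cons j J B : evt (j :: J) B = Z j @^-1` B j `&` evt J B.
Proof.
apply/seteqP; split => w /=.
  by move=> H; split; [apply: H; rewrite mem_head|move=> k kJ; apply: H; rewrite in_cons kJ orbT].
by move=> [Hj HJ] k; rewrite in_cons => /orP[/eqP->//|]; exact: HJ.
Qed.

Lemma evt_meas J B : (forall j, j \in J -> Dom j) -> (forall j, j \in J -> measurable (B j)) ->
  measurable (evt J B).
Proof.
elim: J => [|j J IH] HD HB.
  by rewrite (_ : evt [::] B = setT) //; apply/seteqP; split => w //= _ k.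
rewrite evt_cons; apply: measurableI.
  by apply: pre_meas; [apply: HD|apply: HB]; rewrite mem_head.
by apply: IH => k kJ; [apply: HD|apply: HB]; rewrite in_cons kJ orbT.
Qed.

Lemma evt_prod J B : uniq J -> (forall j, j \in J -> Dom j) -> (forall j, j \in J -> measurable (B j)) ->
  P (evt J B) = \prod_(j <- J) P (Z j @^-1` B j).
Proof. exact: hind.2. Qed.

Let V w := ((Z a w, Z b w), Z c w).

Section core.
Variables (J0 : seq I) (B : I -> set R).
Hypotheses (uJ0 : uniq J0) (DJ0 : forall j, j \in J0 -> Dom j /\ [/\ j != a, j != b & j != c])
  (mB : forall j, j \in J0 -> measurable (B j)).
Let E := evt J0 B.
Let mE : measurable E.
Proof. by apply: evt_meas => // j /DJ0 []. Qed.

Let indep3 X Y' Y : measurable X -> measurable Y' -> measurable Y ->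
  P (Z a @^-1` X `&` Z b @^-1` Y' `&` (Z c @^-1` Y `&` E)) = pi1 X * pi2 Y' * (pi3 Y * P E).
Proof.
move=> mX mY' mY.
pose B' j := if j == a then X else if j == b then Y' else if j == c then Y else B j.
have aJ0 : a \notin J0 by apply/negP => /DJ0 [_ []]; rewrite eqxx.
have bJ0 : b \notin J0 by apply/negP => /DJ0 [_ []]; rewrite eqxx.
have cJ0 : c \notin J0 by apply/negP => /DJ0 [_ []]; rewrite eqxx.
have B'E j : j \in J0 -> B' j = B j.
  by move=> /DJ0 [_ [ja jb jc]]; rewrite /B' (negbTE ja) (negbTE jb) (negbTE jc).
have EB : evt J0 B' = E.
  by apply/seteqP; split => w /= H j jJ; have := H j jJ; rewrite B'E.
have PB : \prod_(j <- J0) P (Z j @^-1` B' j) = P E.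
  rewrite /E evt_prod //; last by move=> j /DJ0 [].
  by apply: eq_big_seq => j jJ; rewrite B'E.
have ba : (b == a) = false by rewrite eq_sym (negbTE ab).
have ca : (c == a) = false by rewrite eq_sym (negbTE ac).
have cb : (c == b) = false by rewrite eq_sym (negbTE bc).
have H : evt [:: a, b, c & J0] B' = Z a @^-1` X `&` Z b @^-1` Y' `&` (Z c @^-1` Y `&` E).
  by rewrite !evt_cons EB /B' eqxx ba eqxx ca cb eqxx setIA.
have u4 : uniq [:: a, b, c & J0].
  by rewrite /= !in_cons !negb_or ab ac bc aJ0 bJ0 cJ0 uJ0.
have D4 : forall j, j \in [:: a, b, c & J0] -> Dom j.
  by move=> j; rewrite !in_cons => /or4P[/eqP->|/eqP->|/eqP->|/DJ0 []].
have m4 : forall j, j \in [:: a, b, c & J0] -> measurable (B' j).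
  move=> j; rewrite !in_cons => /or4P[/eqP->|/eqP->|/eqP->|jJ].
  + by rewrite /B' eqxx.
  + by rewrite /B' ba eqxx.
  + by rewrite /B' ca cb eqxx.
  + by rewrite B'E //; exact: mB.
rewrite -H (evt_prod _ _ u4 D4 m4).
rewrite !big_cons PB /B' eqxx ba eqxx ca cb eqxx.
by rewrite (hlaw _ Da).2 // (hlaw _ Db).2 // (hlaw _ Dc).2 // la lb lc muleA.
Qed.
Lemma core (A : set ((R * R) * R)) : measurable A ->
  P (V @^-1` A `&` E) = (pi1 \x pi2 \x pi3) A * P E.
Proof.
move=> mA.
have hPc Y : measurable Y -> P (Z c @^-1` Y `&` E) = pi3 Y * P E.
  move=> mY; have := indep3 setT setT Y measurableT measurableT mY.
  by rewrite !preimage_setT !setTI !probability_setT !mul1e.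
have mZab : measurable_fun setT (fun w => (Z a w, Z b w)).
  by apply: measurable_fun_pair; exact: mZ.
have st1 Y X12 : measurable Y -> measurable X12 ->
    P ((fun w => (Z a w, Z b w)) @^-1` X12 `&` (Z c @^-1` Y `&` E)) =
    (pi1 \x pi2) X12 * (pi3 Y * P E).
  move=> mY mX12; rewrite -hPc //.
  apply: (@joint_law _ _ _ P _ _ _ _ pi1 pi2) => //.
  - exact: mZ.
  - exact: mZ.
  - by apply: measurableI => //; exact: pre_meas.
  - by move=> X Y' mX mY'; rewrite hPc // indep3.
apply: (@joint_law _ _ _ P _ _ _ _ (pi1 \x pi2) pi3 (fun w => (Z a w, Z b w)) (Z c)) => //.
- exact: mZ.
- move=> X12 Y mX12 mY; rewrite -setIA st1 //; exact: muleA.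
Qed.
End core.
Variables (Dom' : set I) (a' b' : I).
Hypotheses (la' : law a' = pi1) (lb' : law b' = pi2) (a'b' : a' != b').
Hypothesis hDom' : forall i, Dom' i <-> (Dom i /\ [/\ i != a, i != b & i != c]) \/ i = a' \/ i = b'.
Hypothesis hZa : forall w, Z a' w = (Rmap ((Z a w, Z b w), Z c w)).1.1.
Hypothesis hZb : forall w, Z b' w = (Rmap ((Z a w, Z b w), Z c w)).1.2.

Let two_law J0 B Ba Bb : uniq J0 -> (forall j, j \in J0 -> Dom j /\ [/\ j != a, j != b & j != c]) ->
  (forall j, j \in J0 -> measurable (B j)) -> measurable Ba -> measurable Bb ->
  P ([set w | Ba (Z a' w) /\ Bb (Z b' w)] `&` evt J0 B) = pi1 Ba * pi2 Bb * P (evt J0 B).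
Proof.
move=> uJ0 DJ0 mB mBa mBb.
have -> : [set w | Ba (Z a' w) /\ Bb (Z b' w)] = V @^-1` (@Rmap R @^-1` ((Ba `*` Bb) `*` setT)).
  by apply/seteqP; split => w /=; rewrite /V hZa hZb /=; [move=> [] | move=> [] []].
have mS : measurable ((Ba `*` Bb) `*` [set: R]) by apply: measurableX => //; exact: measurableX.
rewrite core //; last first.
  by rewrite -[X in measurable X]setTI; exact: measurable_Rmap.
rewrite hinv // product_measure1E //; last exact: measurableX.
transitivity (pi1 Ba * pi2 Bb * pi3 setT * P (evt J0 B)); first by congr (_ * _ * _); exact: product_measure1E.
by rewrite probability_setT mule1.
Qed.

Let mZ' : measurable_fun setT (Z a') /\ measurable_fun setT (Z b').
Proof.
have mV : measurable_fun setT V.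
  by apply: measurable_fun_pair; [apply: measurable_fun_pair|]; exact: mZ.
have mRV : measurable_fun setT (fun w => Rmap (V w)) by apply: measurableT_comp mV; exact: measurable_Rmap.
have mRV1 : measurable_fun setT (fun w => (Rmap (V w)).1) by apply: measurableT_comp mRV; exact: measurable_fst.
split.
  rewrite (_ : Z a' = fun w => (Rmap (V w)).1.1); last by apply: funext => w; rewrite hZa.
  by apply: measurableT_comp mRV1; exact: measurable_fst.
rewrite (_ : Z b' = fun w => (Rmap (V w)).1.2); last by apply: funext => w; rewrite hZb.
by apply: measurableT_comp mRV1; exact: measurable_snd.
Qed.

Let law_a' : has_law P (Z a') pi1.
Proof.
split; first exact: mZ'.1.
move=> B mB; have := @two_law [::] (fun=> setT) B setT isT ltac:(by []) ltac:(by []) mB measurableT.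
have -> : evt [::] (fun=> setT) = setT by apply/seteqP; split => w // _ j.
rewrite setIT !probability_setT !mule1 => <-; congr (P _); apply/seteqP; by split => w /=; tauto.
Qed.

Let law_b' : has_law P (Z b') pi2.
Proof.
split; first exact: mZ'.2.
move=> B mB; have := @two_law [::] (fun=> setT) setT B isT ltac:(by []) ltac:(by []) measurableT mB.
have -> : evt [::] (fun=> setT) = setT by apply/seteqP; split => w // _ j.
rewrite setIT !probability_setT mul1e mule1 => <-; congr (P _); apply/seteqP; by split => w /=; tauto.
Qed.

Lemma step_main : mutually_independent P Dom' Z /\ (forall i, Dom' i -> has_law P (Z i) (law i)).
Proof.
have hl : forall i, Dom' i -> has_law P (Z i) (law i).
  move=> i /hDom' [[Di _]|[->|->]]; [exact: hlaw|rewrite la'; exact: law_a'|rewrite lb'; exact: law_b'].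
split => //; split; first by move=> i /hl [].
move=> J B uJ DJ mBJ.
pose J0 := [seq j <- [seq j <- J | j != a'] | j != b'].
pose Ba := if a' \in J then B a' else setT.
pose Bb := if b' \in J then B b' else setT.
have J0P j : j \in J0 = [&& j != b', j != a' & j \in J] by rewrite !mem_filter.
have uJ0 : uniq J0 by rewrite !filter_uniq.
have DJ0 j : j \in J0 -> Dom j /\ [/\ j != a, j != b & j != c].
  rewrite J0P => /and3P[jb ja jJ]; case/hDom': (DJ j jJ) => [//|[E|E]].
    by rewrite E eqxx in ja.
  by rewrite E eqxx in jb.
have mB0 j : j \in J0 -> measurable (B j) by rewrite J0P => /and3P[_ _ /mBJ].
have mBa : measurable Ba by rewrite /Ba; case: ifPn => // /mBJ.
have mBb : measurable Bb by rewrite /Bb; case: ifPn => // /mBJ.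
have -> : [set w | forall j, j \in J -> B j (Z j w)] =
    [set w | Ba (Z a' w) /\ Bb (Z b' w)] `&` evt J0 B.
  apply/seteqP; split => w /=.
    move=> H; split; first by rewrite /Ba /Bb; split; case: ifPn => // /H.
    by move=> j; rewrite J0P => /and3P[_ _ /H].
  move=> [[Ha Hb] H0] j jJ.
  case: (eqVneq j a') => [E|ja]; first by move: Ha; rewrite /Ba -E jJ.
  case: (eqVneq j b') => [E|jb]; first by move: Hb; rewrite /Bb -E jJ.
  by apply: H0; rewrite J0P jb ja jJ.
rewrite two_law // (evt_prod _ _ uJ0) //; last by move=> j /DJ0 [].
rewrite (@prod_split _ _ J _ a' uJ) (@prod_split _ _ _ _ b' (filter_uniq _ uJ)) mem_filter eq_sym a'b' /=.
rewrite /Ba /Bb; case: ifPn => a'J; case: ifPn => b'J.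
- by rewrite (law_a'.2 _ (mBJ _ a'J)) (law_b'.2 _ (mBJ _ b'J)) muleA.
- by rewrite (law_a'.2 _ (mBJ _ a'J)) probability_setT mule1 mul1e.
- by rewrite (law_b'.2 _ (mBJ _ b'J)) probability_setT !mul1e.
- by rewrite !probability_setT !mul1e.
Qed.
End step.

Definition up (e : edge) : pt := (e.1.1 + 1, if e.2 then e.1.2 + 1 else e.1.2 - 1).

Lemma eq_sw (e : edge) y : (e == e_sw y) = (up e == y) && e.2.
Proof.
case: e => [[t x] []]; case: y => ty xy; rewrite /up /e_sw /= !xpair_eqE ?andbT ?andbF //.
by apply/andP/andP => -[/eqP h1 /eqP h2]; split; apply/eqP; lia.
Qed.

Lemma eq_nw (e : edge) y : (e == e_nw y) = (up e == y) && ~~ e.2.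
Proof.
case: e => [[t x] []]; case: y => ty xy; rewrite /up /e_nw /= !xpair_eqE ?andbT ?andbF //.
by apply/andP/andP => -[/eqP h1 /eqP h2]; split; apply/eqP; lia.
Qed.

Lemma eq_ne (e : edge) y : (e == e_ne y) = (e.1 == y) && e.2.
Proof. by case: e => [lo []]; rewrite /e_ne xpair_eqE ?andbT ?andbF. Qed.

Lemma eq_se (e : edge) y : (e == e_se y) = (e.1 == y) && ~~ e.2.
Proof. by case: e => [lo []]; rewrite /e_se xpair_eqE ?andbT ?andbF. Qed.

Lemma up_neq (e : edge) y : e.1 = y -> (up e == y) = false.
Proof. by case: e => [[t x] bb] <-; rewrite /up /= xpair_eqE; apply/negbTE/negP => /andP[/eqP h _]; lia. Qed.

Lemma test_sum (e e' : edge) (y : pt) : (inl e == inl e' :> edge + pt) = (e == e') /\ (inl e == inr y :> edge + pt) = false /\ (inr y == inr y :> edge + pt).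
Proof. by split => //=. Qed.

Definition Domb (D : hexData) (p : pt -> bool) (i : edge + pt) : bool :=
  match i with
  | inl e => (p e.1 || (~~ inS D e.1 && inS D (up e))) && ~~ p (up e)
  | inr y => inS D y && ~~ p y
  end.

Lemma Domb_step D (p p' : pt -> bool) y :
  (forall z, p' z = p z || (z == y)) ->
  (forall e : edge, e.1 = y -> ~~ p (up e)) ->
  forall i, Domb D p' i = (Domb D p i && [&& i != inl (e_sw y), i != inl (e_nw y) & i != inr y])
     || (i == inl (e_ne y)) || (i == inl (e_se y)).
Proof.
move=> hp' hsucc [e|z] /=.
- have inlE (e1 e2 : edge) : (inl e1 == inl e2 :> edge + pt) = (e1 == e2) by [].
  rewrite !inlE eq_sw eq_nw eq_ne eq_se !hp'.
  case E1: (e.1 == y).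
    move/eqP: E1 => E1; rewrite up_neq // orbT /= orbF (negbTE (hsucc _ E1)).
    by case: e.2; rewrite ?orbT.
  by case E2: (up e == y); case: e.2; rewrite /= ?orbF ?orbT ?andbF ?andbT ?andbF.
- have inrE (a b : pt) : (inr a == inr b :> edge + pt) = (a == b) by [].
  by rewrite hp' negb_or andbA /= inrE !orbF.
Qed.

Lemma flow_step (R : realType) D (inp : edge -> R) (xi : pt -> R) y : inS D y ->
  let V (e : edge) := if inS D e.1 then flow D inp xi e else inp e in
  flow D inp xi (e_ne y) = xi y + Num.max (V (e_sw y) - V (e_nw y)) 0 /\
  flow D inp xi (e_se y) = xi y + Num.max (V (e_nw y) - V (e_sw y)) 0.
Proof.
move=> Sy V.
have t0y : h_t0 D <= y.1 by case/and3P: Sy => /andP[].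
rewrite /V /flow /=.
case En: `|y.1 - h_t0 D|%N => [|n] /=.
  have ey : y.1 = h_t0 D by lia.
  have -> : inS D (y.1 - 1, y.2 - 1) = false.
    by apply/negbTE/negP => /and3P[/andP[/= h _] _ _]; lia.
  have -> : inS D (y.1 - 1, y.2 + 1) = false.
    by apply/negbTE/negP => /and3P[/andP[/= h _] _ _]; lia.
  by [].
have -> : absz (y.1 - 1 - h_t0 D)%R = n by lia.
by [].
Qed.

Section transfer.
Context d (Omega : measurableType d) (R : realType) (P : probability Omega R).

Lemma indep_transfer (I : eqType) (Dom1 Dom2 : set I) (X Y : I -> Omega -> R) :
  mutually_independent P Dom1 X -> (forall i, Dom2 i -> Dom1 i) ->
  (forall i, Dom2 i -> X i = Y i) -> mutually_independent P Dom2 Y.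
Proof.
move=> [hm hp] h12 hXY; split.
  by move=> i Di; rewrite -hXY //; apply: hm; exact: h12.
move=> J B uJ DJ mB.
have -> : [set w | forall j, j \in J -> B j (Y j w)] = [set w | forall j, j \in J -> B j (X j w)].
  by apply/seteqP; split => w /= H j jJ; have := H j jJ; rewrite hXY //; exact: DJ.
rewrite hp //; last by move=> j /DJ /h12.
by apply: eq_big_seq => j jJ; rewrite hXY //; exact: DJ.
Qed.

Lemma indep_reindex (I J : eqType) (f : J -> I) (Dom : set I) (Dom2 : set J) (X : I -> Omega -> R) :
  injective f -> mutually_independent P Dom X -> (forall j, Dom2 j -> Dom (f j)) ->
  mutually_independent P Dom2 (fun j => X (f j)).
Proof.
move=> finj [hm hp] h2; split; first by move=> j /h2 /hm.
move=> Js B uJs DJs mB.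
pose B' (i : I) : set R := fun r => exists j, f j = i /\ B j r.
have B'f j : B' (f j) = B j.
  apply/seteqP; split => r /=; last by move=> Bj; exists j.
  by move=> [j' [/finj -> ?]].
have := hp (map f Js) B' _ _ _.
rewrite big_map.
have -> : [set w | forall j, j \in map f Js -> B' j (X j w)] =
          [set w | forall j, j \in Js -> B j (X (f j) w)].
  apply/seteqP; split => w /= H.
    by move=> j jJ; rewrite -B'f; apply: H; apply: map_f.
  by move=> i /mapP [j jJ ->]; rewrite B'f; exact: H.
move=> ->.
- by apply: eq_bigr => j _; rewrite B'f.
- by rewrite map_inj_uniq.
- by move=> i /mapP [j jJ ->]; apply: h2; exact: DJs.
- by move=> i /mapP [j jJ ->]; rewrite B'f; exact: mB.
Qed.
End transfer.

Section mainsec.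
Context (R : realType) (pi1 pi2 pi3 : probability R R).
Hypothesis hinv : forall A : set ((R * R) * R), measurable A ->
     (pi1 \x pi2 \x pi3)%E (@Rmap R @^-1` A) = (pi1 \x pi2 \x pi3)%E A.
Variables (D : hexData) (d : measure_display) (Omega : measurableType d) (P : probability Omega R)
  (inp : edge -> Omega -> R) (xi : pt -> Omega -> R).

Definition Zf (i : edge + pt) : Omega -> R :=
  match i with
  | inl e => fun w => if inS D e.1 then flow D (fun e' => inp e' w) (fun y => xi y w) e else inp e w
  | inr y => xi y
  end.
Definition lawf (i : edge + pt) : probability R R :=
  match i with inl e => if e.2 then pi1 else pi2 | inr _ => pi3 end.
Definition Inv (p : pt -> bool) := mutually_independent P (fun i => Domb D p i) Zf /\
  (forall i, Domb D p i -> has_law P (Zf i) (lawf i)).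

Lemma Inv_step p p' y :
  (forall z, p' z = p z || (z == y)) -> inS D y -> ~~ p y ->
  (forall e : edge, up e = y -> inS D e.1 -> p e.1) ->
  (forall e : edge, e.1 = y -> ~~ p (up e)) -> Inv p -> Inv p'.
Proof.
move=> hp' Sy npy hpred hsucc [hi hl].
have upsw : up (e_sw y) = y by case: y {hp' Sy npy hpred hsucc} => t x; rewrite /up /= !subrK.
have upnw : up (e_nw y) = y by case: y {upsw hp' Sy npy hpred hsucc} => t x; rewrite /up /= subrK addrK.
have Da : Domb D p (inl (e_sw y)).
  rewrite /= upsw npy andbT; case: (boolP (inS D (e_sw y).1)) => [/(hpred _ upsw) -> //| _].
  by rewrite Sy orbT.
have Db : Domb D p (inl (e_nw y)).
  rewrite /= upnw npy andbT; case: (boolP (inS D (e_nw y).1)) => [/(hpred _ upnw) -> //| _].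
  by rewrite Sy orbT.
have Dc : Domb D p (inr y) by rewrite /= Sy npy.
have ab : inl (e_sw y) != inl (e_nw y) :> edge + pt by apply/eqP; case.
have a'b' : inl (e_ne y) != inl (e_se y) :> edge + pt by apply/eqP; case.
have := @step_main d Omega R P pi1 pi2 pi3 hinv _ (fun i => Domb D p i) Zf lawf
  (inl (e_sw y)) (inl (e_nw y)) (inr y) hi hl Da Db Dc ab isT isT erefl erefl erefl
  (fun i => Domb D p' i) (inl (e_ne y)) (inl (e_se y)) erefl erefl a'b' _ _ _.
apply.
- move=> i; rewrite (@Domb_step D _ _ _ hp' hsucc i).
  split.
  + by case/orP => [/orP[/andP[H /and3P[h1 h2 h3]]|/eqP ->]|/eqP ->]; [left|right; left|right; right].
  + by case => [[H [h1 h2 h3]]|[->|->]]; rewrite ?eqxx ?orbT // H h1 h2 h3.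
- move=> w; rewrite /= Sy.
  by rewrite (@flow_step R D (fun e' => inp e' w) (fun z => xi z w) y Sy).1.
- move=> w; rewrite /= Sy.
  by rewrite (@flow_step R D (fun e' => inp e' w) (fun z => xi z w) y Sy).2.
Qed.

Lemma Inv_ext (p p' : pt -> bool) : (forall z, p z = p' z) -> Inv p -> Inv p'.
Proof. by move=> h; have -> : p' = p by apply: funext => z; rewrite h. Qed.

Definition proc (T X : int) (y : pt) := inS D y && ((y.1 < T) || ((y.1 == T) && (y.2 < X))).
Definition procT (T : int) (y : pt) := inS D y && (y.1 < T).

Lemma Inv_procX T X : Inv (proc T X) -> Inv (proc T (X + 1)).
Proof.
case Sy: (inS D (T, X)).
- apply: (@Inv_step _ _ (T, X)) => //.
  + move=> [zt zx]; rewrite /proc /=; case Sz: (inS D (zt, zx)) => /=.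
      rewrite xpair_eqE; lia.
    by case: eqP => // -[E1 E2]; move: Sz; rewrite E1 E2 Sy.
  + by rewrite /proc /= negb_and; apply/orP; right; lia.
  + move=> e Eup Se; rewrite /proc Se /=; move: Eup; rewrite /up => -[h _]; lia.
  + move=> e E1; rewrite /proc negb_and; apply/orP; right; rewrite /up E1 /=; lia.
- apply: Inv_ext => z; rewrite /proc; case Sz: (inS D z) => //=.
  have : z != (T, X) by apply/eqP => E; move: Sz; rewrite E Sy.
  case: z {Sz} => zt zx; rewrite /= xpair_eqE; lia.
Qed.

Lemma Inv_procXk T X (k : nat) : Inv (proc T X) -> Inv (proc T (X + k%:Z)).
Proof.
elim: k => [|k IH] H; first by rewrite addr0.
have -> : X + k.+1%:Z = X + k%:Z + 1 by lia.
exact: Inv_procX (IH H).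
Qed.

Lemma Inv_level T : Inv (procT T) -> Inv (procT (T + 1)).
Proof.
move=> H.
have H1 : Inv (proc T (h_xm D T)).
  apply: Inv_ext H => z; rewrite /procT /proc; case Sz: (inS D z) => //=.
  case/and3P: Sz => _ /andP[h1 h2] _.
  case: (eqVneq z.1 T) => [E|ne]; first by rewrite E in h1 *; lia.
  lia.
have := @Inv_procXk _ _ (absz (h_xp D T + 1 - h_xm D T)%R) H1.
apply: Inv_ext => z; rewrite /procT /proc; case Sz: (inS D z) => //=.
case/and3P: Sz => _ /andP[h1 h2] _.
case: (eqVneq z.1 T) => [E|ne]; first by rewrite E in h2 *; lia.
lia.
Qed.

Lemma Inv_levelk (k : nat) : Inv (procT (h_t0 D)) -> Inv (procT (h_t0 D + k%:Z)).
Proof.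
elim: k => [|k IH] H; first by rewrite addr0.
have -> : h_t0 D + k.+1%:Z = h_t0 D + k%:Z + 1 by lia.
exact: Inv_level (IH H).
Qed.

Lemma final_main
  (hasc : forall e, incoming_asc D e -> has_law P (inp e) pi1)
  (hdesc : forall e, incoming_desc D e -> has_law P (inp e) pi2)
  (hxi : forall y, inS D y -> has_law P (xi y) pi3)
  (hindep : mutually_independent P
     (fun i : edge + pt => match i with inl e => incoming D e | inr y => inS D y end)
     (fun i => match i with inl e => inp e | inr y => xi y end)) :
  let out (e : edge) (w : Omega) := flow D (fun e' => inp e' w) (fun y => xi y w) e in
  [/\ mutually_independent P (outgoing D) out,
      (forall e, outgoing_asc D e -> has_law P (out e) pi1)
    & (forall e, outgoing_desc D e -> has_law P (out e) pi2)].
Proof.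
move=> out.
have key (e : edge) : ~~ inS D e.1 -> inS D (up e) ->
    if e.2 then incoming_asc D e else incoming_desc D e.
  case: e => [[t x] []] /= ns su.
    exists (up ((t, x), true)); split => //=; first by rewrite !addrK.
    by rewrite /e_sw /up /= !addrK.
  exists (up ((t, x), false)); split => //=; first by rewrite addrK subrK.
  by rewrite /e_nw /up /= addrK subrK.
have Z0 (e : edge) : ~~ inS D e.1 -> Zf (inl e) = inp e.
  by move=> ns; apply: funext => w /=; rewrite (negbTE ns).
have Inv0 : Inv (fun _ => false).
  split.
    apply: indep_transfer hindep _ _.
      move=> [e|y] /=; last by rewrite andbT.
      rewrite andbT => /andP[ns su]; have := key e ns su.
      by case: e.2 => H; [left|right].
    move=> [e|y] //=; rewrite andbT => /andP[ns su].
    by rewrite (negbTE ns).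
  move=> [e|y] H; last by move: H => /= /andP[/hxi].
  have /andP[ns su] : ~~ inS D e.1 && inS D (up e) by move: H; rewrite /= andbT.
  rewrite Z0 //; have := key e ns su.
  by rewrite /lawf; case: e.2 => Hk; [exact: hasc|exact: hdesc].
have Inv1 : Inv (procT (h_t0 D)).
  apply: Inv_ext Inv0 => z; rewrite /procT; case Sz: (inS D z) => //=.
  by case/and3P: Sz => /andP[h1 h2] _ _; lia.
have := Inv_levelk (absz (h_t1 D + 1 - h_t0 D)%R) Inv1.
have : Inv (inS D).
  apply: Inv_ext (Inv_levelk (absz (h_t1 D + 1 - h_t0 D)%R) Inv1) => z.
  rewrite /procT; case Sz: (inS D z) => //=.
  by case/and3P: Sz => /andP[h1 h2] _ _; lia.
move=> [hi hl] _.
have ho (e : edge) : outgoing D e -> Domb D (inS D) (inl e) /\ inS D e.1.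
  by case => -[y [Sy ns ->]] /=; rewrite Sy /=; split => //; rewrite /up /=.
have Zout (e : edge) : outgoing D e -> Zf (inl e) = out e.
  by move=> /ho [_ Se]; apply: funext => w /=; rewrite Se.
split.
- apply: (@indep_transfer _ _ _ _ _ (outgoing D) (outgoing D) (fun e => Zf (inl e))) => //.
  apply: (@indep_reindex _ _ _ P _ _ inl _ (outgoing D) _ _ hi) => //.
    by move=> ? ? [].
  by move=> e /ho [].
- move=> e He; rewrite -Zout; last by left.
  have := hl (inl e) (ho e (or_introl He)).1.
  by case: He => y [_ _ ->].
- move=> e He; rewrite -Zout; last by right.
  have := hl (inl e) (ho e (or_intror He)).1.
  by case: He => y [_ _ ->].
Qed.
End mainsec.

Theorem mainTheorem3 (R : realType) (pi1 pi2 pi3 : probability R R)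
  (* Borel probability measures on [0, oo) *)
  (hpi1 : pi1 [set x : R | 0 <= x] = 1%E)
  (hpi2 : pi2 [set x : R | 0 <= x] = 1%E)
  (hpi3 : pi3 [set x : R | 0 <= x] = 1%E)
  (* R mu = mu for mu = pi1 x pi2 x pi3 *)
  (hinv : forall A : set ((R * R) * R), measurable A ->
     (pi1 \x pi2 \x pi3)%E (@Rmap R @^-1` A) = (pi1 \x pi2 \x pi3)%E A)
  (D : hexData) (hD : is_hexagonal D)
  (d : measure_display) (Omega : measurableType d) (P : probability Omega R)
  (inp : edge -> Omega -> R) (xi : pt -> Omega -> R)
  (hasc : forall e, incoming_asc D e -> has_law P (inp e) pi1)
  (hdesc : forall e, incoming_desc D e -> has_law P (inp e) pi2)
  (hxi : forall y, inS D y -> has_law P (xi y) pi3)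
  (hindep : mutually_independent P
     (fun i : edge + pt => match i with inl e => incoming D e | inr y => inS D y end)
     (fun i => match i with inl e => inp e | inr y => xi y end)) :
  let out (e : edge) (w : Omega) := flow D (fun e' => inp e' w) (fun y => xi y w) e in
  [/\ mutually_independent P (outgoing D) out,
      (forall e, outgoing_asc D e -> has_law P (out e) pi1)
    & (forall e, outgoing_desc D e -> has_law P (out e) pi2)].
Proof. exact: (@final_main R pi1 pi2 pi3 hinv D d Omega P inp xi hasc hdesc hxi hindep). Qed.
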